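(* Let $V$ be a set of interpretations over $A$. (1) For each ADF $D$ such that $\mathrm{mod}(D)=V$, there is a mod-characterization $f_D$ for $V$; (2) vice versa, for each mod-characterization $f:\mathcal{V}_2\to\mathcal{V}_2$ for $V$ we find $\mathrm{mod}(D_f)=V$.
   Context: Let $A$ be a fixed finite set of statements. An interpretation is a mapping $v:A\to\{\mathbf{t},\mathbf{f},\mathbf{u}\}$; $\mathcal{V}$ is the set of all interpretations and $\mathcal{V}_2$ the set of two-valued ones (never assigning $\mathbf{u}$). The information ordering is $\mathbf{u}<_i\mathbf{t}$, $\mathbf{u}<_i\mathbf{f}$, extended pointwise. For $v\in\mathcal{V}$, $[v]_2$ is the set of two-valued interpretations $w$ with $v\leq_i w$. An ADF is $D=(A,L,C)$ where each statement $a$ has an acceptance formula $\varphi_a$ over its parents. The operator $\Gamma_D$ maps $v$ to the interpretation assigning to each $a$ the greatest lower bound w.r.t. $\leq_i$ (consensus: $\mathbf{t}$ if all are $\mathbf{t}$, $\mathbf{f}$ if all are $\mathbf{f}$, otherwise $\mathbf{u}$) of $\{w(\varphi_a)\mid w\in[v]_2\}$. $v$ is a two-valued model of $D$ iff $v$ is two-valued and $\Gamma_D(v)=v$ (equivalently $v(a)=v(\varphi_a)$ for all $a$); $\mathrm{mod}(D)$ is the set of two-valued models. A function $f:\mathcal{V}_2\to\mathcal{V}_2$ is a mod-characterization of $V$ iff (1) $V\subseteq\mathcal{V}_2$ and (2) for each $v\in\mathcal{V}_2$, $v\in V$ iff $f(v)=v$. For $f:\mathcal{V}_2\to\mathcal{V}_2$,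 $D_f$ is the ADF whose acceptance formula for each $a$ is $\varphi^f_a=\bigvee_{w\in\mathcal{V}_2,\,f(w)(a)=\mathbf{t}}\phi_w$ with $\phi_w=\bigwedge_{w(a')=\mathbf{t}}a'\wedge\bigwedge_{w(a')=\mathbf{f}}\neg a'$. *)

(* Defs.v *)
From HB Require Import structures.
From mathcomp Require Import all_boot.
Set Implicit Arguments. Unset Strict Implicit. Unset Printing Implicit Defensive.

Inductive tv := Tt | Ff | Uu.
Definition tv_eqb (x y : tv) : bool :=
  match x, y with Tt, Tt | Ff, Ff | Uu, Uu => true | _, _ => false end.
Lemma tv_eqP : Equality.axiom tv_eqb.
Proof. by case; case; constructor. Qed.
Definition tv_enc (x : tv) : 'I_3 :=
  match x with Tt => inord 0 | Ff => inord 1 | Uu => inord 2 end.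
Definition tv_dec (i : 'I_3) : tv :=
  match val i with 0 => Tt | 1 => Ff | _ => Uu end.
Lemma tv_encK : cancel tv_enc tv_dec.
Proof. by case; rewrite /tv_dec /= inordK. Qed.
HB.instance Definition _ := Finite.copy tv (can_type tv_encK).

Definition le_i (x y : tv) : bool := (x == Uu) || (x == y).

Section ADF.
Variable A : finType.

Definition interp := {ffun A -> tv}.
HB.instance Definition _ := Finite.on interp.
Definition two_valued (v : interp) : bool := [forall a, v a != Uu].
Definition interp2 := {v : interp | two_valued v}.
HB.instance Definition _ := Finite.on interp2.
Definition le_info (v w : interp) : bool := [forall a, le_i (v a) (w a)].

Inductive formula :=
| FVar of A | FTop | FBot | FNeg of formula
| FAnd of formula & formula | FOr of formula & formula.

Fixpoint fvars (p : formula) : seq A :=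
  match p with
  | FVar a => [:: a]
  | FTop | FBot => [::]
  | FNeg q => fvars q
  | FAnd q r | FOr q r => fvars q ++ fvars r
  end.

Fixpoint feval (w : interp) (p : formula) : bool :=
  match p with
  | FVar a => w a == Tt
  | FTop => true
  | FBot => false
  | FNeg q => ~~ feval w q
  | FAnd q r => feval w q && feval w r
  | FOr q r => feval w q || feval w r
  end.

Record ADF := mkADF {
  links : rel A;                     (* links b a : b is a parent of a *)
  acc : A -> formula;
  acc_wf : forall a b, b \in fvars (acc a) -> links b a
}.

Definition completions (v : interp) : seq interp :=
  [seq w <- map val (enum {: interp2}) | le_info v w].

(* consensus (glb wrt <=_i) of a list of two-valued truth values *)
Definition consensus (s : seq bool) : tv :=
  if all id s then Tt else if all negb s then Ff else Uu.

Definition Gamma (D : ADF) (v : interp) : interp :=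
  [ffun a => consensus [seq feval w (acc D a) | w <- completions v]].

Definition is_model (D : ADF) (v : interp) : bool :=
  two_valued v && (Gamma D v == v).

Definition models (D : ADF) : {set interp} := [set v | is_model D v].

Definition mod_char (V : {set interp}) (f : interp2 -> interp2) : Prop :=
  (forall v, v \in V -> two_valued v) /\
  (forall v : interp2, (val v \in V) <-> f v = v).

Definition phi_w (w : interp) : formula :=
  foldr FAnd FTop
    [seq (if w a == Tt then FVar a else FNeg (FVar a))
       | a <- enum A & w a != Uu].

Definition acc_f (f : interp2 -> interp2) (a : A) : formula :=
  foldr FOr FBot [seq phi_w (val w) | w <- enum {: interp2} & val (f w) a == Tt].

Definition D_f (f : interp2 -> interp2) : ADF :=
  @mkADF (fun _ _ => true) (acc_f f) (fun _ _ _ => erefl).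

End ADF.

(* Main.v *)
Require Import Defs.
From mathcomp Require Import all_boot.
Set Implicit Arguments. Unset Strict Implicit.

Section S.
Variable A : finType.

Lemma tvE (x y : tv) : (x == y) = tv_eqb x y. Proof. by apply/eqP/tv_eqP. Qed.

Lemma tv2P (v : interp A) : two_valued v -> forall a, v a != Uu.
Proof. by move/forallP. Qed.

Lemma le_info2 (v w : interp A) : two_valued v -> two_valued w ->
  le_info v w = (v == w).
Proof.
move=> hv hw; apply/idP/eqP => [/forallP H|->].
  apply/ffunP => a; move: (H a); rewrite /le_i (negbTE (tv2P hv a)) /=.
  by move/eqP.
by apply/forallP => a; rewrite /le_i eqxx orbT.
Qed.

Lemma compl2 (v : interp A) : two_valued v ->
  completions v = nseq (size (completions v)) v /\ 0 < size (completions v).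
Proof.
move=> hv; split.
  apply/(all_pred1P v (completions v)); apply/allP => w; rewrite mem_filter => /andP[hle H]; move: H hle => /mapP[w' _ ->].
  by case: w' => w' hw' /= hle; rewrite eq_sym -(le_info2 hv hw').
have -> : v = val (exist _ v hv : interp2 A) by [].
rewrite -has_predT; apply/hasP; exists v => //.
rewrite mem_filter /= le_info2 // eqxx /=.
by apply/mapP; exists (exist _ v hv) => //; rewrite mem_enum.
Qed.

Lemma consensus_nseq n b : consensus (nseq n.+1 b) = if b then Tt else Ff.
Proof. by rewrite /consensus !all_nseq /=; case: b. Qed.

Lemma Gamma2 (D : ADF A) (v : interp A) (hv : two_valued v) a :
  Gamma D v a = if feval v (acc D a) then Tt else Ff.
Proof.
rewrite /Gamma ffunE; have [E P] := compl2 hv.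
rewrite E map_nseq; move: P; case: (size _) => // n _.
by rewrite consensus_nseq.
Qed.

Lemma feval_and v s : feval v (foldr (@FAnd A) (FTop A) s) = all (feval v) s.
Proof. by elim: s => //= x s ->. Qed.
Lemma feval_or v s : feval v (foldr (@FOr A) (FBot A) s) = has (feval v) s.
Proof. by elim: s => //= x s ->. Qed.

Lemma feval_phi (v w : interp A) : two_valued v -> two_valued w ->
  feval v (phi_w w) = (v == w).
Proof.
move=> hv hw; rewrite /phi_w feval_and all_map.
have -> : [seq a <- enum A | w a != Uu] = enum A.
  by apply/all_filterP/allP => a _; apply: tv2P.
apply/allP/eqP => [H|->].
  apply/ffunP => a; have Ha : a \in enum A by rewrite mem_enum.
  have := H a Ha; have := tv2P hv a;
  have := tv2P hw a; rewrite /preim /= !tvE; case: (w a) => /=; rewrite ?tvE; by case: (v a).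
by move=> a _; rewrite /preim /=; have := tv2P hw a; case E: (w a); rewrite !tvE /= ?E ?tvE.
Qed.

Lemma feval_accf (f : interp2 A -> interp2 A) (v : interp2 A) a :
  feval (val v) (acc_f f a) = (val (f v) a == Tt).
Proof.
rewrite /acc_f feval_or has_map; apply/hasP/idP => [[w]|H].
  rewrite mem_filter /= => /andP[H _].
  rewrite feval_phi; last exact: valP.
  by move/eqP/val_inj => ->.
  exact: valP.
exists v; first by rewrite mem_filter H mem_enum.
by rewrite /= feval_phi ?eqxx //; exact: valP.
Qed.

End S.

Theorem proposition4 (A : finType) (V : {set interp A}) :
  (forall D : ADF A, models D = V ->
     exists fD : interp2 A -> interp2 A, mod_char V fD) /\
  (forall f : interp2 A -> interp2 A, mod_char V f -> models (D_f f) = V).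
Proof.
split.
  move=> D HD.
  have G2 : forall v : interp2 A, two_valued (Gamma D (val v)).
    move=> [v hv]; apply/forallP => a /=; rewrite Gamma2 //.
    by case: ifP; rewrite tvE.
  exists (fun v => exist (@two_valued A) _ (G2 v)); split.
    by move=> v; rewrite -HD inE => /andP[].
  move=> [v hv]; rewrite -HD inE /is_model /= hv /=; split.
    by move/eqP => E; apply: val_inj.
  by move=> E; apply/eqP; have := f_equal val E.
move=> f [H1 H2]; apply/setP => v; rewrite inE /is_model.
case hv: (two_valued v); last first.
  by apply/esym/negbTE; apply/negP => /H1; rewrite hv.
rewrite /=.
have -> : v = val (exist _ v hv : interp2 A) by [].
have : (val (exist _ v hv : interp2 A) \in V) <-> f (exist _ v hv) = exist _ v hv
  by apply: H2.
move: (exist _ v hv) => w Hw.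
have GE : Gamma (D_f f) (val w) = val (f w).
  apply/ffunP => a; rewrite Gamma2; last by case: w {Hw}.
  rewrite /= feval_accf; have := tv2P (valP (f w)) a.
  by rewrite !tvE; case: (val (f w) a).
apply/eqP/idP; rewrite GE.
  by move=> E; apply/Hw/val_inj.
by move/Hw => ->.
Qed.
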